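(* Let $n\ge 1$. If there exist a commutative ring $R$, an injective group homomorphism $\iota:\mu_n\to R^\times$, and an $\mathbb{S}[\mu_{n,+}]$-generator $X\in R$, then $n+1$ is a prime power.
   Context: $\mu_n$ is the group of $n$-th roots of unity. With $\iota(0):=0$, $X\in R$ is an $\mathbb{S}[\mu_{n,+}]$-generator of $R$ if every $z\in R$ can be written uniquely as a finite sum $\sum_j\iota(\alpha_j)X^j$ with $\alpha_j\in\mu_n\cup\{0\}$. *)

(* Defs.v *)
From HB Require Import structures.
From mathcomp Require Import all_boot all_order all_algebra all_field.
Set Implicit Arguments. Unset Strict Implicit. Unset Printing Implicit Defensive.
Import Order.TTheory GRing.Theory Num.Theory.
Local Open Scope ring_scope.

Definition mu (n : nat) : pred algC := [pred z : algC | z ^+ n == 1].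

(* iota is an injective group homomorphism mu_n -> R^x
   (given as a map algC -> R, only its values on mu_n matter). *)
Definition inj_unit_hom (R : comNzRingType) (n : nat) (iota : algC -> R) : Prop :=
  [/\ forall a, a \in mu n -> exists b : R, iota a * b = 1,
      forall a b, a \in mu n -> b \in mu n -> iota (a * b) = iota a * iota b
    & forall a b, a \in mu n -> b \in mu n -> iota a = iota b -> a = b].

Definition iota0 (R : comNzRingType) (iota : algC -> R) (a : algC) : R :=
  if a == 0 then 0 else iota a.

Definition represents (R : comNzRingType) (n : nat) (iota : algC -> R)
    (X : R) (c : nat -> algC) (z : R) : Prop :=
  (forall j, c j = 0 \/ c j \in mu n) /\
  exists N : nat, (forall j, (N <= j)%N -> c j = 0) /\
    z = \sum_(j < N) iota0 iota (c j) * X ^+ j.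

Definition S_mu_generator (R : comNzRingType) (n : nat) (iota : algC -> R) (X : R) : Prop :=
  forall z : R,
    (exists c, represents n iota X c z) /\
    (forall c c', represents n iota X c z -> represents n iota X c' z ->
       forall j, c j = c' j).

(* Main.v *)
Require Import Defs.
From HB Require Import structures.
From mathcomp Require Import all_boot all_order all_algebra all_field.
From mathcomp Require Import ring zify.
From Stdlib Require Import ClassicalEpsilon.

Set Implicit Arguments. Unset Strict Implicit. Unset Printing Implicit Defensive.
Import Order.TTheory GRing.Theory Num.Theory.
Local Open Scope ring_scope.

Section Main.
Variables (n : nat) (hn : (1 <= n)%N) (R : comNzRingType) (iota : algC -> R) (X : R).
Hypotheses (hiota : inj_unit_hom n iota) (hX : S_mu_generator n iota X).

Definition cong (u v : R) := exists w, u - v = X * w.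

Lemma cong_refl u : cong u u.
Proof. by exists 0; rewrite subrr mulr0. Qed.

Lemma cong_eq u v : u = v -> cong u v.
Proof. by move=> ->; apply: cong_refl. Qed.

Lemma cong_sym u v : cong u v -> cong v u.
Proof. by case=> w h; exists (- w); rewrite mulrN -h opprB. Qed.

Lemma cong_trans u v t : cong u v -> cong v t -> cong u t.
Proof.
by case=> w1 h1 [w2 h2]; exists (w1 + w2); rewrite mulrDr -h1 -h2 addrA subrK.
Qed.

Lemma congD u1 v1 u2 v2 : cong u1 v1 -> cong u2 v2 -> cong (u1 + u2) (v1 + v2).
Proof.
case=> w1 h1 [w2 h2]; exists (w1 + w2); rewrite mulrDr -h1 -h2; ring.
Qed.

Lemma congM u1 v1 u2 v2 : cong u1 v1 -> cong u2 v2 -> cong (u1 * u2) (v1 * v2).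
Proof.
case=> w1 h1 [w2 h2]; exists (w1 * u2 + v1 * w2).
have -> : u1 = v1 + X * w1 by rewrite -h1; ring.
have -> : u2 = v2 + X * w2 by rewrite -h2; ring.
ring.
Qed.

Definition Dg (a : algC) := (a == 0) || (a \in mu n).

Lemma A1 z : exists a, Dg a /\ cong z (iota0 iota a).
Proof.
have [[c [hc [N [hN ->]]]] _] := hX z.
exists (c 0%N); split.
  by case: (hc 0%N) => [->|h]; rewrite /Dg ?eqxx ?h ?orbT.
case: N hN => [|N] hN.
  by rewrite big_ord0 hN // /iota0 eqxx; apply: cong_refl.
exists (\sum_(i < N) iota0 iota (c i.+1) * X ^+ i).
rewrite big_ord_recl expr0 mulr1 /= (addrC (iota0 _ _)) addrK mulr_sumr.
by apply: eq_bigr => i _; rewrite /= exprS mulrCA.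
Qed.

Lemma A2 a b : Dg a -> Dg b -> cong (iota0 iota a) (iota0 iota b) -> a = b.
Proof.
move=> Da Db [w hw].
have [[d [hd [M [hM hw']]]] _] := hX w.
pose c j := if j == 0%N then a else 0.
pose c' j := if j == 0%N then b else d j.-1.
have dig_ok e : Dg e -> e = 0 \/ e \in mu n.
  by case/orP => [/eqP ->|h]; [left|right].
have r1 : represents n iota X c (iota0 iota a).
  split.
    by move=> j; rewrite /c; case: (j == 0%N); [apply: dig_ok|left].
  exists 1%N; split; first by case => //.
  by rewrite big_ord1 /c /= expr0 mulr1.
have r2 : represents n iota X c' (iota0 iota a).
  split.
    by move=> j; rewrite /c'; case: (j == 0%N); [apply: dig_ok|apply: hd].
  exists M.+1; split.
    by case => // j hj; rewrite /c' /=; apply: hM.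
  rewrite big_ord_recl /c' /= expr0 mulr1.
  have -> : iota0 iota a = iota0 iota b + X * w by rewrite -hw; ring.
  congr (_ + _); rewrite hw' mulr_sumr; apply: eq_bigr => i _.
  by rewrite /= exprS mulrCA.
by have := (hX (iota0 iota a)).2 c c' r1 r2 0%N; rewrite /c /c' /=.
Qed.


Let w : algC := projT1 (C_prim_root_exists hn).
Let prim_w : n.-primitive_root w := projT2 (C_prim_root_exists hn).

Definition enc (i : 'I_n.+1) : algC := if (i : nat) == 0%N then 0 else w ^+ i.-1.

Lemma w_neq0 : w != 0.
Proof.
apply/eqP => w0; have := prim_expr_order prim_w; rewrite w0 expr0n.
by case: n hn => // m _ /eqP; rewrite eq_sym oner_eq0.
Qed.

Lemma encD i : Dg (enc i).
Proof.
rewrite /enc; case: eqP => _; first by rewrite /Dg eqxx.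
by rewrite /Dg; apply/orP; right; rewrite inE -exprM mulnC exprM (prim_expr_order prim_w) expr1n.
Qed.

Lemma enc_inj : injective enc.
Proof.
move=> i j; rewrite /enc.
case: (boolP ((i : nat) == 0%N)) => hi; case: (boolP ((j : nat) == 0%N)) => hj.
- by move=> _; apply/val_inj; rewrite /= (eqP hi) (eqP hj).
- by move/esym/eqP; rewrite expf_eq0 (negbTE w_neq0) andbF.
- by move/eqP; rewrite expf_eq0 (negbTE w_neq0) andbF.
move/eqP; rewrite (eq_prim_root_expr prim_w) => /eqP h.
apply/val_inj => /=.
have lti := ltn_ord i; have ltj := ltn_ord j.
rewrite !modn_small in h; lia.
Qed.

Lemma enc_surj a : Dg a -> exists i, enc i = a.
Proof.
case/orP => [/eqP ->|].
  by exists ord0; rewrite /enc eqxx.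
rewrite inE => /eqP /(prim_rootP prim_w) [k ->].
have hk : (k.+1 < n.+1)%N by rewrite ltnS ltn_ord.
by exists (Ordinal hk); rewrite /enc /=.
Qed.

Definition rep (i : 'I_n.+1) : R := iota0 iota (enc i).

Lemma P1 z : exists i, cong z (rep i).
Proof.
have [a [Da h]] := A1 z; have [i ei] := enc_surj Da.
by exists i; rewrite /rep ei.
Qed.

Lemma P2 i j : cong (rep i) (rep j) -> i = j.
Proof. by move=> h; apply: enc_inj; apply: A2 => //; apply: encD. Qed.

Lemma iota1 : iota 1 = 1.
Proof.
case: hiota => hu hm _.
have m1 : (1 : algC) \in mu n by rewrite inE expr1n.
have [b hb] := hu 1 m1.
have e : iota 1 = iota 1 * iota 1 by rewrite -hm // mulr1.
by have := hb; rewrite {1}e -mulrA hb mulr1.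
Qed.

Record F : predArgType := MkF { unF : 'I_n.+1 }.
HB.instance Definition _ := [isNew for unF].
HB.instance Definition _ := [Equality of F by <:].
HB.instance Definition _ := [Choice of F by <:].
HB.instance Definition _ := [Countable of F by <:].
HB.instance Definition _ := [Finite of F by <:].

Definition repF (x : F) := rep (unF x).
Definition dig (z : R) : F := MkF (proj1_sig (constructive_indefinite_description _ (P1 z))).

Lemma digP z : cong z (repF (dig z)).
Proof. by rewrite /repF /dig /=; case: constructive_indefinite_description. Qed.

Lemma repdig z : cong (repF (dig z)) z.
Proof. exact: cong_sym (digP z). Qed.

Lemma dig_eq u v : cong u v -> dig u = dig v.
Proof.
move=> h; apply: val_inj; apply: P2.
exact: cong_trans (repdig u) (cong_trans h (digP v)).
Qed.

Lemma dig_rep x : dig (repF x) = x.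
Proof. by apply: val_inj; apply: P2; apply: repdig. Qed.

Lemma dig_cong u v : dig u = dig v -> cong u v.
Proof.
move=> h; apply: cong_trans (digP u) _; rewrite h; exact: repdig.
Qed.

Definition zeroF := dig 0.
Definition oneF := dig 1.
Definition addF x y := dig (repF x + repF y).
Definition oppF x := dig (- repF x).
Definition mulF x y := dig (repF x * repF y).
Definition invF x := dig (iota0 iota (enc (unF x))^-1).

Lemma addFA : associative addF.
Proof.
move=> x y z; apply: dig_eq.
apply: cong_trans (congD (cong_refl _) (repdig _)) _.
apply: cong_trans _ (congD (cong_sym (repdig _)) (cong_refl _)).
by apply: cong_eq; rewrite addrA.
Qed.

Lemma addFC : commutative addF.
Proof. by move=> x y; rewrite /addF addrC. Qed.

Lemma add0F : left_id zeroF addF.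
Proof.
move=> x; rewrite -[RHS]dig_rep; apply: dig_eq.
apply: cong_trans (congD (repdig _) (cong_refl _)) _.
by apply: cong_eq; rewrite add0r.
Qed.

Lemma addNF : left_inverse zeroF oppF addF.
Proof.
move=> x; apply: dig_eq.
apply: cong_trans (congD (repdig _) (cong_refl _)) _.
by apply: cong_eq; rewrite addNr.
Qed.

HB.instance Definition _ := GRing.isZmodule.Build F addFA addFC add0F addNF.

Lemma mulFA : associative mulF.
Proof.
move=> x y z; apply: dig_eq.
apply: cong_trans (congM (cong_refl _) (repdig _)) _.
apply: cong_trans _ (congM (cong_sym (repdig _)) (cong_refl _)).
by apply: cong_eq; rewrite mulrA.
Qed.

Lemma mulFC : commutative mulF.
Proof. by move=> x y; rewrite /mulF mulrC. Qed.

Lemma mul1F : left_id oneF mulF.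
Proof.
move=> x; rewrite -[RHS]dig_rep; apply: dig_eq.
apply: cong_trans (congM (repdig _) (cong_refl _)) _.
by apply: cong_eq; rewrite mul1r.
Qed.

Lemma mulFDl : left_distributive mulF (+%R : F -> F -> F).
Proof.
move=> x y z; apply: dig_eq.
apply: cong_trans (congM (repdig _) (cong_refl _)) _.
apply: cong_trans _ (congD (cong_sym (repdig _)) (cong_sym (repdig _))).
by apply: cong_eq; rewrite mulrDl.
Qed.

Lemma one_diff : oneF != (0 : F).
Proof.
apply/eqP => /dig_cong h.
have D1 : Dg 1 by rewrite /Dg inE expr1n eqxx orbT.
have D0 : Dg 0 by rewrite /Dg eqxx.
have : cong (iota0 iota 1) (iota0 iota 0) by rewrite /iota0 oner_eq0 eqxx iota1.
by move/(A2 D1 D0)/eqP; rewrite oner_eq0.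
Qed.

HB.instance Definition _ := GRing.Zmodule_isComNzRing.Build F mulFA mulFC mul1F mulFDl one_diff.

Lemma zero_F : (0 : F) = MkF ord0.
Proof.
rewrite -[RHS]dig_rep; congr dig.
by rewrite /repF /rep /enc /= /iota0 eqxx.
Qed.

Lemma mulVF (x : F) : x != 0 -> mulF (invF x) x = 1.
Proof.
move=> x0; apply: dig_eq.
apply: cong_trans (congM (repdig _) (cong_refl _)) _.
apply: cong_eq.
have a0 : enc (unF x) != 0.
  apply: contra x0; rewrite zero_F => /eqP h.
  have e : unF x = ord0 by apply: enc_inj; rewrite h /enc eqxx.
  by apply/eqP; apply: val_inj; rewrite /= e.
have := encD (unF x); rewrite /Dg (negbTE a0) /= => am.
have aim : (enc (unF x))^-1 \in mu n by rewrite inE exprVn (eqP am) invr1.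
case: hiota => _ hm _.
rewrite /repF /rep /iota0 invr_eq0 (negbTE a0) -hm // mulVf //.
exact: iota1.
Qed.

Lemma invF0 : invF 0 = 0.
Proof.
rewrite zero_F /invF /= /enc eqxx invr0 /iota0 eqxx.
by rewrite -zero_F.
Qed.

HB.instance Definition _ := GRing.ComNzRing_isField.Build F mulVF invF0.

Lemma card_F : #|F| = n.+1.
Proof.
rewrite -(card_ord n.+1); apply: (@bij_eq_card _ _ unF).
by exists MkF => // - [].
Qed.

Lemma main_conc : exists p k : nat, [/\ prime p, (0 < k)%N & n.+1 = (p ^ k)%N].
Proof.
have [p pp pc] := finPcharP (F : finFieldType).
have := card_pprimeChar pc.
have e : #|pPrimeCharType pc| = #|F| := erefl.
rewrite e card_F => h; exists p, (logn p n.+1); split => //.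
move: h; case: (logn _ _) => //; rewrite expn0 => /eqP.
by rewrite eqSS => /eqP n0; move: hn; rewrite n0.
Qed.

End Main.

Theorem corollary5p8 (n : nat) (hn : (1 <= n)%N)
  (R : comNzRingType) (iota : algC -> R) (X : R)
  (hiota : inj_unit_hom n iota) (hX : S_mu_generator n iota X) :
  exists p k : nat, [/\ prime p, (0 < k)%N & n.+1 = (p ^ k)%N].
Proof. exact: (main_conc hn hiota hX). Qed.
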